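(* For every program $P$, state $s$ and natural number $n$, $$\mathrm{conv}\,F_n(P,s)=\{\mu\mid \langle P,s\rangle\Downarrow^{\mathcal S,n}\mu\ \text{for some scheduler }\mathcal S\},$$ where $\mathrm{conv}$ denotes the convex hull (set of finite convex combinations).
   Context: Fix a set $S$ of states. For a set $X$, $\mathcal V_{=1,\omega}(X)$ (resp. $\mathcal V_{\le1,\omega}(X)$) is the set of finitely supported probability (resp. subprobability) distributions on $X$, written as finite formal sums $\sum_i p_i\cdot x_i$; $\bot$ is the zero distribution and $1\cdot x=\delta_x$ the point mass; ordered, added and scaled pointwise. For each atomic program $\mathtt a$ a function $[\![\mathtt a]\!]:S\to\mathcal V_{=1,\omega}(S)$ is given, and for each condition $\mathtt b$ a function $[\![\mathtt b]\!]:S\to\{\mathtt{tt},\mathtt{ff}\}$. Programs: $P::=\mathtt{skip}\mid\mathtt a\mid P;P\mid P\parallel P\mid P+_{\mathtt p}P\mid P+P\mid\mathtt{if}\ \mathtt b\ \mathtt{then}\ P\ \mathtt{else}\ P\mid\mathtt{while}\ \mathtt b\ P$ ($\mathtt p\in[0,1]\cap\mathbb Q$). The small-step relation $\longrightarrow\subseteq(\mathrm{Pr}\times S)\times\mathcal V_{=1,\omega}(S+\mathrm{Pr}\times S)$ is the least relation closed under: $\langle\mathtt a,s\rangle\to[\![\mathtt a]\!](s)$; $\langle\mathtt{skip},s\rangle\to1\cdot s$; if $\langle P,s\rangle\to\sum_ip_i\langle P_i,s_i\rangle+\sum_jp_j s_j$ then $\langle P;Q,s\rangle\to\sum_ip_i\langle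 P_i;Q,s_i\rangle+\sum_jp_j\langle Q,s_j\rangle$ and $\langle P\parallel Q,s\rangle\to\sum_ip_i\langle P_i\parallel Q,s_i\rangle+\sum_jp_j\langle Q,s_j\rangle$; if $\langle Q,s\rangle\to\sum_ip_i\langle Q_i,s_i\rangle+\sum_jp_js_j$ then $\langle P\parallel Q,s\rangle\to\sum_ip_i\langle P\parallel Q_i,s_i\rangle+\sum_jp_j\langle P,s_j\rangle$; if $\langle P,s\rangle\to\mu$ and $\langle Q,s\rangle\to\nu$ then $\langle P+_{\mathtt p}Q,s\rangle\to\mathtt p\cdot\mu+(1-\mathtt p)\cdot\nu$; if $\langle P,s\rangle\to\mu$ or $\langle Q,s\rangle\to\mu$ then $\langle P+Q,s\rangle\to\mu$; $\langle\mathtt{if}\ \mathtt b\ \mathtt{then}\ P\ \mathtt{else}\ Q,s\rangle\to1\cdot\langle P,s\rangle$ if $[\![\mathtt b]\!](s)=\mathtt{tt}$, $\to1\cdot\langle Q,s\rangle$ otherwise; $\langle\mathtt{while}\ \mathtt b\ P,s\rangle\to1\cdot\langle P;\mathtt{while}\ \mathtt b\ P,s\rangle$ if $[\![\mathtt b]\!](s)=\mathtt{tt}$, $\to1\cdot s$ otherwise. Write $\langle P,s\rangle\!\longrightarrow=\{\mu\mid\langle P,s\rangle\to\mu\}$. Let $I=((\mathrm{Pr}\times S)\times\mathcal V_{=1,\omega}(S+\mathrm{Pr}\times S))^*\times(\mathrm{Pr}\times S)$, elements written $h\langle P,s\rangle$ ($h$ a history; juxtaposition extends histories). A scheduler is a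 partial function $\mathcal S:I\rightharpoonup\mathcal V_{=1,\omega}(S+\mathrm{Pr}\times S)$ whose value at $h\langle P,s\rangle$, when defined, is a finite convex combination of elements of $\langle P,s\rangle\!\longrightarrow$. Big-step: $h\langle P,s\rangle\Downarrow^{\mathcal S,0}\bot$; and $h\langle P,s\rangle\Downarrow^{\mathcal S,n+1}\sum_kp_k(\sum_ip_{k,i}\mu_{k,i}+\sum_jp_{k,j}s_{k,j})$ whenever $\mathcal S(h\langle P,s\rangle)=\sum_kp_k\nu_k$ with $\nu_k=\sum_ip_{k,i}\langle P_{k,i},s_{k,i}\rangle+\sum_jp_{k,j}s_{k,j}\in\langle P,s\rangle\!\longrightarrow$ and $h\langle P,s\rangle\nu_k\langle P_{k,i},s_{k,i}\rangle\Downarrow^{\mathcal S,n}\mu_{k,i}$ for all $k,i$; with empty history we write $\langle P,s\rangle\Downarrow^{\mathcal S,n}\mu$. Finite sets $F_n(P,s)\subseteq\mathcal V_{\le1,\omega}(S)$ are defined by $F_0(P,s)=\{\bot\}$ and $F_{n+1}(P,s)=\bigcup\{\sum_ip_i\cdot F_n(P_i,s_i)+\sum_jp_j\cdot\delta_{s_j}\mid\langle P,s\rangle\to\sum_ip_i\langle P_i,s_i\rangle+\sum_jp_js_j\}$, with Minkowski sums and scalings of sets. *)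

(* Defs.v *)
From Stdlib Require Import Reals List QArith Qreals ClassicalEpsilon.
Import ListNotations.
Open Scope R_scope.

Definition eqb_cl {T : Type} (x y : T) : bool :=
  if excluded_middle_informative (x = y) then true else false.

Definition sumR (l : list R) : R := fold_right Rplus 0 l.

(* Finitely supported (sub)distributions are represented as functions X -> R.
   [enum_supp mu l]: l enumerates (without repetition) exactly the support of mu. *)
Definition enum_supp {X : Type} (mu : X -> R) (l : list X) : Prop :=
  NoDup l /\ forall x, In x l <-> mu x <> 0.

Definition is_fdist {X : Type} (mu : X -> R) : Prop :=
  (forall x, 0 <= mu x) /\ exists l, enum_supp mu l /\ sumR (map mu l) = 1.

Definition delta {X : Type} (x : X) : X -> R := fun y => if eqb_cl x y then 1 else 0.

Definition is_push {X Y : Type} (f : X -> Y) (mu : X -> R) (nu : Y -> R) : Prop :=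
  exists l, enum_supp mu l /\
    forall y, nu y = sumR (map (fun x => if eqb_cl (f x) y then mu x else 0) l).

Section Lang.
Variables (St A B : Type).

Definition prob := { q : Q | (0 <= q <= 1)%Q }.

Inductive prog : Type :=
| Skip : prog
| Atom : A -> prog
| Seq : prog -> prog -> prog
| Par : prog -> prog -> prog
| PChoice : prob -> prog -> prog -> prog
| NChoice : prog -> prog -> prog
| Ite : B -> prog -> prog -> prog
| While : B -> prog -> prog.

Definition X := (St + (prog * St))%type.

Variable semA : A -> St -> St -> R.
Variable semB : B -> St -> bool.

Definition seq_map (Q : prog) (x : X) : X :=
  match x with inl t => inr (Q, t) | inr (P', t) => inr (Seq P' Q, t) end.
Definition parl_map (Q : prog) (x : X) : X :=
  match x with inl t => inr (Q, t) | inr (P', t) => inr (Par P' Q, t) end.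
Definition parr_map (P : prog) (x : X) : X :=
  match x with inl t => inr (P, t) | inr (Q', t) => inr (Par P Q', t) end.

Inductive step : prog -> St -> (X -> R) -> Prop :=
| st_atom : forall a s,
    step (Atom a) s (fun x => match x with inl t => semA a s t | inr _ => 0 end)
| st_skip : forall s, step Skip s (delta (inl s))
| st_seq : forall P Q s mu nu,
    step P s mu -> is_push (seq_map Q) mu nu -> step (Seq P Q) s nu
| st_parl : forall P Q s mu nu,
    step P s mu -> is_push (parl_map Q) mu nu -> step (Par P Q) s nu
| st_parr : forall P Q s mu nu,
    step Q s mu -> is_push (parr_map P) mu nu -> step (Par P Q) s nu
| st_pchoice : forall (p : prob) P Q s mu nu,
    step P s mu -> step Q s nu ->
    step (PChoice p P Q) s
      (fun x => Q2R (proj1_sig p) * mu x + (1 - Q2R (proj1_sig p)) * nu x)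
| st_nchoice_l : forall P Q s mu, step P s mu -> step (NChoice P Q) s mu
| st_nchoice_r : forall P Q s mu, step Q s mu -> step (NChoice P Q) s mu
| st_if_tt : forall b P Q s, semB b s = true -> step (Ite b P Q) s (delta (inr (P, s)))
| st_if_ff : forall b P Q s, semB b s = false -> step (Ite b P Q) s (delta (inr (Q, s)))
| st_while_tt : forall b P s, semB b s = true ->
    step (While b P) s (delta (inr (Seq P (While b P), s)))
| st_while_ff : forall b P s, semB b s = false -> step (While b P) s (delta (inl s)).

Definition hist := list ((prog * St) * (X -> R)).

Definition scheduler := hist -> prog -> St -> option (X -> R).

Definition conv_step (P : prog) (s : St) (nu : X -> R) : Prop :=
  exists ws : list (R * (X -> R)),
    Forall (fun w => 0 <= fst w /\ step P s (snd w)) ws /\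
    sumR (map fst ws) = 1 /\
    forall x, nu x = sumR (map (fun w => fst w * snd w x) ws).

Definition valid_scheduler (sch : scheduler) : Prop :=
  forall h P s nu, sch h P s = Some nu -> conv_step P s nu.

(* contribution  Σ_i p_i μ_i + Σ_j p_j δ_{s_j}  of nu = Σ_i p_i <P_i,s_i> + Σ_j p_j s_j,
   where l enumerates the support of nu and mu x is the distribution attached to x *)
Definition combine (nu : X -> R) (l : list X) (mu : X -> St -> R) (t : St) : R :=
  sumR (map (fun x => nu x * match x with inl s' => delta s' t | inr _ => mu x t end) l).

Fixpoint bigstep (sch : scheduler) (n : nat) (h : hist) (P : prog) (s : St)
    (rho : St -> R) {struct n} : Prop :=
  match n with
  | O => forall t, rho t = 0
  | S n' =>
    exists (nu : X -> R) (ks : list (R * (X -> R) * list X * (X -> St -> R))),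
      sch h P s = Some nu /\
      Forall (fun k =>
        let '(pk, nuk, lk, muk) := k in
        0 <= pk /\ step P s nuk /\ enum_supp nuk lk /\
        forall P' s', In (inr (P', s')) lk ->
          bigstep sch n' (h ++ [((P, s), nuk)]) P' s' (muk (inr (P', s')))) ks /\
      sumR (map (fun k => let '(pk, _, _, _) := k in pk) ks) = 1 /\
      (forall x, nu x = sumR (map (fun k => let '(pk, nuk, _, _) := k in pk * nuk x) ks)) /\
      (forall t, rho t =
         sumR (map (fun k => let '(pk, nuk, lk, muk) := k in pk * combine nuk lk muk t) ks))
  end.

Fixpoint Fset (n : nat) (P : prog) (s : St) (rho : St -> R) {struct n} : Prop :=
  match n with
  | O => forall t, rho t = 0
  | S n' =>
    exists (nu : X -> R) (l : list X) (mu : X -> St -> R),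
      step P s nu /\ enum_supp nu l /\
      (forall P' s', In (inr (P', s')) l -> Fset n' P' s' (mu (inr (P', s')))) /\
      (forall t, rho t = combine nu l mu t)
  end.

End Lang.

Definition conv {Y : Type} (F : (Y -> R) -> Prop) (rho : Y -> R) : Prop :=
  exists ws : list (R * (Y -> R)),
    Forall (fun w => 0 <= fst w /\ F (snd w)) ws /\
    sumR (map fst ws) = 1 /\
    forall y, rho y = sumR (map (fun w => fst w * snd w y) ws).

(* Main.v *)
Require Import Defs.
From Stdlib Require Import Reals List QArith Qreals ClassicalEpsilon Permutation Lra Lia.
Import ListNotations.
Open Scope R_scope.

Lemma sumR_app l1 l2 : sumR (l1 ++ l2) = sumR l1 + sumR l2.
Proof. induction l1; simpl; [ring|rewrite IHl1; ring]. Qed.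

Lemma sumR_map_ext {T} (f g : T -> R) l :
  (forall x, In x l -> f x = g x) -> sumR (map f l) = sumR (map g l).
Proof. intro H; rewrite (map_ext_in f g l H); reflexivity. Qed.

Lemma sumR_map_plus {T} (f g : T -> R) l :
  sumR (map (fun x => f x + g x) l) = sumR (map f l) + sumR (map g l).
Proof. induction l; simpl; [ring|rewrite IHl; ring]. Qed.

Lemma sumR_map_scal {T} c (f : T -> R) l :
  sumR (map (fun x => c * f x) l) = c * sumR (map f l).
Proof. induction l; simpl; [ring|rewrite IHl; ring]. Qed.

Lemma sumR_map_zero {T} (f : T -> R) l :
  (forall x, In x l -> f x = 0) -> sumR (map f l) = 0.
Proof. induction l; simpl; intros H; [ring|]. rewrite H, IHl; auto. ring. Qed.

Lemma sumR_perm l1 l2 : Permutation l1 l2 -> sumR l1 = sumR l2.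
Proof. induction 1; simpl; try lra. Qed.

Lemma sumR_flat_map {T U} (f : U -> R) (g : T -> list U) l :
  sumR (map f (flat_map g l)) = sumR (map (fun u => sumR (map f (g u))) l).
Proof. induction l; simpl; auto. rewrite map_app, sumR_app, IHl; auto. Qed.

Lemma conv_single {Y} (F : (Y -> R) -> Prop) rho : F rho -> conv F rho.
Proof.
  intro H. exists [(1, rho)]. split; [|split].
  - constructor; [simpl; split; auto; lra|constructor].
  - simpl; ring.
  - intro y; simpl; ring.
Qed.

Lemma conv_mono {Y} (F G : (Y -> R) -> Prop) rho :
  (forall r, F r -> G r) -> conv F rho -> conv G rho.
Proof.
  intros H [ws [H1 [H2 H3]]]. exists ws; repeat split; auto.
  eapply Forall_impl; [|exact H1]. intros w [? ?]; split; auto.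
Qed.

Lemma conv_conv_aux {Y} (F : (Y -> R) -> Prop) ws :
  Forall (fun w => 0 <= fst w /\ conv F (snd w)) ws ->
  exists vs, Forall (fun v => 0 <= fst v /\ F (snd v)) vs /\
    sumR (map fst vs) = sumR (map fst ws) /\
    forall y, sumR (map (fun v => fst v * snd v y) vs) = sumR (map (fun w => fst w * snd w y) ws).
Proof.
  induction ws as [|[w sg] ws IH]; intros Hf.
  - exists []; simpl; auto.
  - inversion Hf as [|? ? [Hw [us [Hu1 [Hu2 Hu3]]]] Hf']; subst.
    destruct (IH Hf') as [vs [Hv1 [Hv2 Hv3]]].
    exists (map (fun u => (w * fst u, snd u)) us ++ vs). split; [|split].
    + apply Forall_app; split; auto.
      apply Forall_map. eapply Forall_impl; [|exact Hu1]. simpl. intros u [? ?]; split; auto.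
      apply Rmult_le_pos; auto.
    + rewrite map_app, sumR_app, map_map, Hv2. simpl. rewrite sumR_map_scal, Hu2. ring.
    + intro y. rewrite map_app, sumR_app, map_map, Hv3. simpl. rewrite Hu3.
      rewrite <- sumR_map_scal. f_equal. f_equal. apply map_ext. intros; simpl; ring.
Qed.

Lemma conv_conv {Y} (F : (Y -> R) -> Prop) rho : conv (conv F) rho -> conv F rho.
Proof.
  intros [ws [H1 [H2 H3]]]. destruct (conv_conv_aux F ws H1) as [vs [V1 [V2 V3]]].
  exists vs; repeat split; auto. congruence. intro y; rewrite V3; auto.
Qed.

Section Main.
Variables (St A B : Type) (semA : A -> St -> St -> R) (semB : B -> St -> bool).
Local Notation XX := (X St A B).
Local Notation comb := (Defs.combine St A B).

Definition gv (mu : XX -> St -> R) (x : XX) (t : St) : R :=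
  match x with inl s' => delta s' t | inr _ => mu x t end.

Lemma combine_cons nu x l mu t :
  comb nu (x :: l) mu t = nu x * gv mu x t + comb nu l mu t.
Proof. reflexivity. Qed.

Lemma combine_nil nu mu t : comb nu [] mu t = 0.
Proof. reflexivity. Qed.

Lemma combine_ext nu l mu1 mu2 t :
  (forall x, In x l -> gv mu1 x t = gv mu2 x t) -> comb nu l mu1 t = comb nu l mu2 t.
Proof.
  intro H. unfold Defs.combine. apply sumR_map_ext. intros x Hx.
  pose proof (H x Hx) as E; unfold gv in E; rewrite E; auto.
Qed.

Lemma combine_conv (F : prog A B -> St -> (St -> R) -> Prop) nu l m :
  NoDup l ->
  (forall P' s', In (inr (P', s')) l -> conv (F P' s') (m (inr (P', s')))) ->
  conv (fun rho => exists mu, (forall P' s', In (inr (P', s')) l -> F P' s' (mu (inr (P', s'))))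
                            /\ forall t, rho t = comb nu l mu t)
       (fun t => comb nu l m t).
Proof.
  induction l as [|x l IH]; intros Hnd Hc.
  - exists [(1, fun _ => 0)]. split; [|split].
    + constructor; [|constructor]. simpl. split; [lra|]. exists m. split.
      * intros ? ? [].
      * intros; rewrite combine_nil; auto.
    + simpl; ring.
    + intros; simpl; rewrite combine_nil; ring.
  - inversion Hnd as [|? ? Hx Hnd']; subst.
    destruct IH as [ws [W1 [W2 W3]]]; auto.
    { intros P' s' Hin; apply Hc; right; auto. }
    destruct x as [s0 | [P0 s0]].
    + exists (map (fun w => (fst w, fun t => nu (inl s0) * delta s0 t + snd w t)) ws).
      split; [|split].
      * apply Forall_map. eapply Forall_impl; [|exact W1]. simpl.
        intros w [Hw [mu [Hm1 Hm2]]]. split; auto. exists mu. split.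
        -- intros P' s' [E|Hin]; [discriminate|]; auto.
        -- intro t. rewrite combine_cons, Hm2. reflexivity.
      * rewrite map_map; simpl; auto.
      * intro t. rewrite map_map. simpl.
        rewrite combine_cons.
        transitivity (sumR (map (fun w => (nu (inl s0) * delta s0 t) * fst w + fst w * snd w t) ws)).
        2: { apply sumR_map_ext; intros; ring. }
        rewrite sumR_map_plus, W3, sumR_map_scal, W2. simpl. ring.
    + destruct (Hc P0 s0 (or_introl eq_refl)) as [us [U1 [U2 U3]]].
      set (x := inr (P0, s0) : XX) in *.
      exists (flat_map (fun u => map (fun w => (fst u * fst w, fun t => nu x * snd u t + snd w t)) ws) us).
      split; [|split].
      * apply Forall_forall. intros v Hv. apply in_flat_map in Hv as [u [Hu Hv]].
        apply in_map_iff in Hv as [w [Ev Hw]]. subst v. simpl.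
        rewrite Forall_forall in U1, W1.
        destruct (U1 u Hu) as [Hu1 Hu2]. destruct (W1 w Hw) as [Hw1 [mu [Hm1 Hm2]]].
        split; [apply Rmult_le_pos; auto|].
        exists (fun y => if excluded_middle_informative (y = x) then snd u else mu y).
        split.
        -- intros P' s' [E|Hin].
           ++ simpl. unfold x in E; injection E as E1 E2; rewrite <- E1, <- E2.
 match goal with |- context [excluded_middle_informative ?p] => destruct (excluded_middle_informative p) as [_|N] end; [auto|exfalso; apply N; reflexivity].


           ++ simpl. match goal with |- context [excluded_middle_informative ?p] => destruct (excluded_middle_informative p) as [E|_] end.
              ** exfalso; apply Hx; rewrite <- E; auto.
              ** auto.
        -- intro t. rewrite combine_cons, Hm2. simpl.
           match goal with |- context [excluded_middle_informative ?p] => destruct (excluded_middle_informative p) as [_|N]; [|congruence] end.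
           f_equal. apply combine_ext. intros y Hy.
           destruct y; simpl; auto.
           match goal with |- context [excluded_middle_informative ?p] => destruct (excluded_middle_informative p) as [E|_]; auto end.
           exfalso; apply Hx; rewrite <- E; auto.
      * rewrite sumR_flat_map. rewrite <- U2. apply sumR_map_ext. intros u _.
        rewrite map_map. simpl. rewrite sumR_map_scal, W2. ring.
      * intro t. rewrite sumR_flat_map. rewrite combine_cons. simpl gv.
        rewrite W3, U3. set (S := sumR (map (fun w : R * (St -> R) => fst w * snd w t) ws)).
        transitivity (sumR (map (fun u : R * (St -> R) => nu x * (fst u * snd u t) + S * fst u) us)).
        { rewrite sumR_map_plus, !sumR_map_scal, U2. ring. }
        apply sumR_map_ext. intros u _.
        rewrite map_map. simpl.
        transitivity (sumR (map (fun w : R * (St -> R) => fst u * (nu x * snd u t) * fst w + fst u * (fst w * snd w t)) ws)).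
        2: { apply sumR_map_ext; intros; ring. }
        rewrite sumR_map_plus, !sumR_map_scal, W2. unfold S. ring.
Qed.


Local Notation Fs := (Fset St A B semA semB).
Local Notation bs := (bigstep St A B semA semB).
Local Notation stp := (step St A B semA semB).
Local Notation hist' := (hist St A B).
Local Notation sched := (scheduler St A B).

Lemma bwd : forall n sch h P s rho, bs sch n h P s rho -> conv (Fs n P s) rho.
Proof.
  induction n; intros sch h P s rho H.
  - apply conv_single; exact H.
  - simpl in H. destruct H as [nu [ks [_ [HF [Hs [_ Hr]]]]]].
    apply conv_conv.
    exists (map (fun k : R * (XX -> R) * list XX * (XX -> St -> R) =>
                   let '(pk, nuk, lk, muk) := k in (pk, fun t => comb nuk lk muk t)) ks).
    split; [|split].
    + apply Forall_map. eapply Forall_impl; [|exact HF].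
      intros [[[pk nuk] lk] muk] [Hp [Hst [He Hch]]]. simpl. split; auto.
      eapply conv_mono; [|apply combine_conv with (F := Fs n)].
      * intros r [mu [H1 H2]]. simpl. exists nuk, lk, mu. auto.
      * apply He.
      * intros P' s' Hin. eapply IHn. apply Hch; auto.
    + rewrite map_map, <- Hs. f_equal. apply map_ext; intros [[[? ?] ?] ?]; reflexivity.
    + intro t. rewrite Hr, map_map. f_equal; apply map_ext; intros [[[? ?] ?] ?]; reflexivity.
Qed.

Definition relevant (h : hist') (P : prog A B) (s : St) (h' : hist') (Q : prog A B) (t : St) :=
  (h' = h /\ Q = P /\ t = s) \/ exists nu r, h' = h ++ ((P, s), nu) :: r.

Lemma bigstep_local : forall n (sch1 sch2 : sched) h P s rho,
  (forall h' Q t, relevant h P s h' Q t -> sch1 h' Q t = sch2 h' Q t) ->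
  bs sch1 n h P s rho -> bs sch2 n h P s rho.
Proof.
  induction n; intros sch1 sch2 h P s rho Hag H; [exact H|].
  simpl in H |- *. destruct H as [nu [ks [H1 [HF H2]]]].
  exists nu, ks. split; [rewrite <- Hag; auto; left; auto|]. split; auto.
  eapply Forall_impl; [|exact HF].
  intros [[[pk nuk] lk] muk] [Hp [Hst [He Hch]]]. split; [|split; [|split]]; auto.
  intros P' s' Hin. eapply IHn; [|apply Hch; auto].
  intros h' Q t [[E [E1 E2]]|[nu' [r E]]]; apply Hag; right.
  - exists nuk, []. subst; auto.
  - exists nuk, (((P', s'), nu') :: r). subst. rewrite <- app_assoc. reflexivity.
Qed.

Definition E : Type := (R * (XX -> R) * list XX * (XX -> St -> R))%type.
Definition eA (e : E) : R := let '(pk, _, _, _) := e in pk.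
Definition eNu (e : E) : XX -> R := let '(_, nuk, _, _) := e in nuk.
Definition good n P s (e : E) : Prop :=
  let '(a, nu, l, m) := e in 0 <= a /\ stp P s nu /\ enum_supp nu l /\
    forall P' s', In (inr (P', s')) l -> conv (Fs n P' s') (m (inr (P', s'))).
Definition val (nl : list E) (t : St) : R :=
  sumR (map (fun k : E => let '(pk, nuk, lk, muk) := k in pk * comb nuk lk muk t) nl).
Definition wgt (nl : list E) : R := sumR (map (fun k : E => let '(pk, _, _, _) := k in pk) nl).

Lemma comb_mix nu l m1 m2 a w t : a + w <> 0 ->
  (a + w) * comb nu l (fun x t => (a * m1 x t + w * m2 x t) / (a + w)) t =
  a * comb nu l m1 t + w * comb nu l m2 t.
Proof.
  intro H. unfold Defs.combine. rewrite <- !sumR_map_scal, <- sumR_map_plus.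
  apply sumR_map_ext. intros [s'|?] _; simpl; field; auto.
Qed.

Lemma comb_perm nu l1 l2 m t : enum_supp nu l1 -> enum_supp nu l2 ->
  comb nu l1 m t = comb nu l2 m t.
Proof.
  intros [N1 H1] [N2 H2]. unfold Defs.combine. apply sumR_perm, Permutation_map.
  apply NoDup_Permutation; auto. intro x; rewrite H1, H2; tauto.
Qed.

Lemma insert n P s nl w nu l mu :
  Forall (good n P s) nl -> NoDup (map eNu nl) -> 0 <= w -> stp P s nu -> enum_supp nu l ->
  (forall P' s', In (inr (P', s')) l -> Fs n P' s' (mu (inr (P', s')))) ->
  exists nl', Forall (good n P s) nl' /\ NoDup (map eNu nl') /\ wgt nl' = w + wgt nl /\
    forall t, val nl' t = w * comb nu l mu t + val nl t.
Proof.
  intros Hg Hnd Hw Hst He Hch.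
  destruct (Req_dec w 0) as [->|Hw0].
  { exists nl; repeat split; auto; try ring. intros; ring. }
  destruct (excluded_middle_informative (exists e, In e nl /\ eNu e = nu)) as [[e [Hin Enu]]|Hno].
  - apply in_split in Hin as [nl1 [nl2 ->]].
    destruct e as [[[a nue] le] me]. simpl in Enu; subst nue.
    rewrite Forall_app in Hg. destruct Hg as [Hg1 Hg2]. inversion Hg2 as [|? ? Hge Hg2']; subst.
    destruct Hge as [Ha [_ [Hle Hchl]]].
    assert (Haw : a + w <> 0) by lra.
    exists (nl1 ++ (a + w, nu, le, fun x t => (a * me x t + w * mu x t) / (a + w)) :: nl2).
    split; [|split; [|split]].
    + apply Forall_app; split; auto. constructor; auto. simpl.
      split; [lra|]. split; auto. split; auto.
      intros P' s' Hin. apply conv_conv.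
      exists [(a / (a + w), me (inr (P', s'))); (w / (a + w), mu (inr (P', s')))].
      split; [|split].
      * constructor; [|constructor; [|constructor]]; simpl; split.
        -- apply Rmult_le_pos; auto. left; apply Rinv_0_lt_compat; lra.
        -- auto.
        -- apply Rmult_le_pos; auto. left; apply Rinv_0_lt_compat; lra.
        -- apply conv_single, Hch. apply (proj2 He), (proj2 Hle), Hin.
      * simpl. field; auto.
      * intro t. simpl. field; auto.
    + rewrite map_app in *. simpl in *. exact Hnd.
    + unfold wgt. rewrite !map_app, !sumR_app. simpl. ring.
    + intro t. unfold val. rewrite !map_app, !sumR_app. simpl.
      rewrite comb_mix; auto. rewrite (comb_perm nu l le mu t He Hle). ring.
  - exists ((w, nu, l, mu) :: nl). split; [|split; [|split]].
    + constructor; auto. simpl. split; [|split; [|split]]; auto.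
      intros; apply conv_single; auto.
    + simpl. constructor; auto. intro Hin. apply in_map_iff in Hin as [e [E1 E2]].
      apply Hno; exists e; auto.
    + reflexivity.
    + intro t; reflexivity.
Qed.

Lemma normalize n P s ws :
  Forall (fun w => 0 <= fst w /\ Fs (S n) P s (snd w)) ws ->
  exists nl, Forall (good n P s) nl /\ NoDup (map eNu nl) /\ wgt nl = sumR (map fst ws) /\
    forall t, val nl t = sumR (map (fun w => fst w * snd w t) ws).
Proof.
  induction ws as [|[w r] ws IH]; intros Hf.
  - exists []. repeat split; auto. constructor.
  - inversion Hf as [|? ? [Hw Hr] Hf']; subst.
    destruct (IH Hf') as [nl [G1 [G2 [G3 G4]]]].
    simpl in Hr. destruct Hr as [nu [l [mu [Hst [He [Hch Hre]]]]]].
    destruct (insert n P s nl w nu l mu G1 G2 Hw Hst He Hch) as [nl' [I1 [I2 [I3 I4]]]].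
    exists nl'. repeat split; auto.
    + rewrite I3, G3. reflexivity.
    + intro t. rewrite I4, G4. simpl. rewrite Hre. reflexivity.
Qed.

Lemma nodup_map_inj {T U} (f : T -> U) l a b :
  NoDup (map f l) -> In a l -> In b l -> f a = f b -> a = b.
Proof.
  induction l; simpl; intros Hn Ha Hb E; [contradiction|].
  inversion Hn as [|? ? Hx Hn']; subst.
  destruct Ha as [<-|Ha], Hb as [<-|Hb]; auto.
  - exfalso; apply Hx. rewrite E; apply in_map; auto.
  - exfalso; apply Hx. rewrite <- E; apply in_map; auto.
Qed.

Lemma skipn_len {T} (h l : list T) : skipn (length h) (h ++ l) = l.
Proof. induction h; simpl; auto. Qed.
Lemma firstn_len {T} (h l : list T) : firstn (length h) (h ++ l) = h.
Proof. induction h; simpl; auto. rewrite IHh; auto. Qed.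

Definition cfg (r : hist') (Q : prog A B) (t : St) : prog A B * St :=
  match r with [] => (Q, t) | (c, _) :: _ => c end.

Definition GoodS n h P s (nl : list E) (nu : XX -> R) (c : prog A B * St) (sc : sched) : Prop :=
  valid_scheduler St A B semA semB sc /\
  exists e : E, In e nl /\ eNu e = nu /\
    (let '(_, _, l, m) := e in In (inr c) l /\ bs sc n (h ++ [((P, s), nu)]) (fst c) (snd c) (m (inr c))).

Definition pickS n h P s nl nu c : sched :=
  match excluded_middle_informative (exists sc, GoodS n h P s nl nu c sc) with
  | left H => proj1_sig (constructive_indefinite_description _ H)
  | right _ => fun _ _ _ => None
  end.

Lemma pickS_spec n h P s nl nu c :
  (exists sc, GoodS n h P s nl nu c sc) -> GoodS n h P s nl nu c (pickS n h P s nl nu c).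
Proof.
  intro H. unfold pickS. destruct (excluded_middle_informative _) as [H'|H'].
  - exact (proj2_sig (constructive_indefinite_description _ H')).
  - contradiction.
Qed.

Lemma pickS_valid n h P s nl nu c : valid_scheduler St A B semA semB (pickS n h P s nl nu c).
Proof.
  unfold pickS. destruct (excluded_middle_informative _) as [H'|H'].
  - exact (proj1 (proj2_sig (constructive_indefinite_description _ H'))).
  - intros ? ? ? ? Hc; discriminate.
Qed.

Definition Dist (nl : list E) : XX -> R :=
  fun x => sumR (map (fun k : E => let '(pk, nuk, _, _) := k in pk * nuk x) nl).

Definition mkS n h P s (nl : list E) : sched := fun h' Q t =>
  if excluded_middle_informative (h' = h /\ Q = P /\ t = s) then Some (Dist nl) else
  match skipn (length h) h' with
  | (PS, nu) :: r =>
      if excluded_middle_informative (firstn (length h) h' = h /\ PS = (P, s))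
      then pickS n h P s nl nu (cfg r Q t) h' Q t else None
  | [] => None
  end.

Lemma mkS_child n h P s nl nu r Q t :
  mkS n h P s nl (h ++ ((P, s), nu) :: r) Q t =
  pickS n h P s nl nu (cfg r Q t) (h ++ ((P, s), nu) :: r) Q t.
Proof.
  unfold mkS. destruct (excluded_middle_informative _) as [[E1 _]|_].
  - exfalso. apply (f_equal (@length _)) in E1. rewrite length_app in E1. simpl in E1. lia.
  - rewrite skipn_len, firstn_len.
    destruct (excluded_middle_informative _) as [_|N]; auto. exfalso; auto.
Qed.

Lemma mkS_valid n h P s nl :
  Forall (good n P s) nl -> wgt nl = 1 -> valid_scheduler St A B semA semB (mkS n h P s nl).
Proof.
  intros Hg Hw h' Q t nu' Hs. unfold mkS in Hs.
  destruct (excluded_middle_informative _) as [[E1 [E2 E3]]|_].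
  - injection Hs as <-. subst.
    exists (map (fun k : E => let '(pk, nuk, _, _) := k in (pk, nuk)) nl). split; [|split].
    + apply Forall_map. eapply Forall_impl; [|exact Hg].
      intros [[[a nu] l] m] [Ha [Hst _]]; simpl; auto.
    + rewrite map_map, <- Hw. unfold wgt. f_equal. apply map_ext. intros [[[? ?] ?] ?]; reflexivity.
    + intro x. unfold Dist. rewrite map_map. f_equal. apply map_ext. intros [[[? ?] ?] ?]; reflexivity.
  - destruct (skipn (length h) h') as [|[PS nu] r]; [discriminate|].
    destruct (excluded_middle_informative _); [|discriminate].
    eapply pickS_valid; eauto.
Qed.

Lemma fwd : forall n h P s rho, conv (Fs n P s) rho ->
  exists sch : sched, valid_scheduler St A B semA semB sch /\ bs sch n h P s rho.
Proof.
  induction n; intros h P s rho [ws [W1 [W2 W3]]].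
  - exists (fun _ _ _ => None). split; [intros ? ? ? ? Hc; discriminate|].
    simpl. intro t. rewrite W3. apply sumR_map_zero. intros w Hin.
    rewrite Forall_forall in W1. destruct (W1 w Hin) as [_ Hz]. simpl in Hz. rewrite Hz; ring.
  - destruct (normalize n P s ws W1) as [nl [G1 [G2 [G3 G4]]]].
    rewrite W2 in G3.
    exists (mkS n h P s nl). split; [apply mkS_valid; auto|].
    simpl. exists (Dist nl), nl. split; [|split; [|split; [|split]]].
    + unfold mkS. destruct (excluded_middle_informative _) as [_|N]; auto. exfalso; auto.
    + rewrite Forall_forall. intros [[[a nu] l] m] Hin.
      pose proof G1 as G1'. rewrite Forall_forall in G1'.
      destruct (G1' _ Hin) as [Ha [Hst [He Hch]]].
      simpl. split; [|split; [|split]]; auto. intros P' s' Hin'.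
      destruct (IHn (h ++ [((P, s), nu)]) P' s' (m (inr (P', s'))) (Hch _ _ Hin')) as [sc [Hv Hb]].
      assert (HG : exists sc, GoodS n h P s nl nu (P', s') sc).
      { exists sc. split; auto. exists (a, nu, l, m). simpl. auto. }
      destruct (pickS_spec _ _ _ _ _ _ _ HG) as [_ [e' [Hin2 [Enu He']]]].
      assert (e' = (a, nu, l, m)) as ->.
      { apply (nodup_map_inj eNu nl); auto. }
      destruct He' as [_ Hb0]. simpl in Hb0.
      eapply bigstep_local; [|exact Hb0].
      intros h' Q t [[-> [-> ->]]|[nu' [r ->]]].
      * rewrite mkS_child. reflexivity.
      * rewrite <- app_assoc. simpl. rewrite mkS_child. reflexivity.
    + exact G3.
    + intro x; reflexivity.
    + intro t. rewrite W3, <- G4. reflexivity.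
Qed.

End Main.

Theorem theorem5 (St A B : Type) (semA : A -> St -> St -> R) (semB : B -> St -> bool)
  (HsemA : forall a s, is_fdist (semA a s))
  (P : prog A B) (s : St) (n : nat) (rho : St -> R) :
  conv (Fset St A B semA semB n P s) rho <->
  exists sch : scheduler St A B,
    valid_scheduler St A B semA semB sch /\ bigstep St A B semA semB sch n nil P s rho.
Proof.
  split.
  - apply fwd.
  - intros [sch [_ Hb]]. eapply bwd; exact Hb.
Qed.
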